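(* Let $n\ge1$ be an integer. Then $n\equiv 0$ or $1 \pmod 4$ if and only if every permutation $(a_1,\dots,a_n)$ of $\{1,\dots,n\}$ for which the $n-1$ differences $|a_2-a_1|,\dots,|a_n-a_{n-1}|$ are pairwise distinct satisfies $a_1\equiv a_n \pmod 2$. *)

(* Defs.v *)
From mathcomp Require Import all_boot.
Set Implicit Arguments. Unset Strict Implicit. Unset Printing Implicit Defensive.

Definition absdiff (a b : nat) : nat := (a - b) + (b - a).

Definition consec_diffs (s : seq nat) : seq nat :=
  pairmap (fun x y => absdiff y x) (head 0 s) (behead s).

Definition graceful_perm (n : nat) (s : seq nat) : Prop :=
  perm_eq s (iota 1 n) /\ uniq (consec_diffs s).

(* Main.v *)
Require Import Defs.
From mathcomp Require Import all_boot.
From mathcomp Require Import zify.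

Lemma perm_range (s : seq nat) (m : nat) :
  uniq s -> size s = m -> (forall x, x \in s -> 1 <= x <= m) ->
  perm_eq s (iota 1 m).
Proof.
move=> us sz hr.
have sub : {subset s <= iota 1 m}.
  by move=> x /hr hx; rewrite mem_iota; lia.
have hsz : size (iota 1 m) <= size s by rewrite size_iota sz.
have [_ e] := uniq_min_size us sub hsz.
by apply: uniq_perm => //; apply: iota_uniq.
Qed.

Lemma sumn_iota1 m : (sumn (iota 1 m)).*2 = m * m.+1.
Proof.
elim: m => [//|m IH].
have -> : iota 1 m.+1 = iota 1 (m + 1) by rewrite addn1.
rewrite (iotaD 1 m 1) sumn_cat /= doubleD IH -!muln2. lia.
Qed.

Lemma par_pairmap x t :
  (sumn (pairmap (fun a b => absdiff b a) x t) + x + last x t) %% 2 = 0.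
Proof.
elim: t x => [|y t IH] x /=.
  lia.
have := IH y. rewrite /absdiff. lia.
Qed.

Lemma range_pairmap n x t :
  (forall y, y \in x :: t -> 1 <= y <= n) -> uniq (x :: t) ->
  forall d, d \in pairmap (fun a b => absdiff b a) x t -> 1 <= d <= n.-1.
Proof.
elim: t x => [|y t IH] x //= hr /andP[nx ut] d.
rewrite inE => /orP[/eqP -> | hd].
  have hx := hr x (mem_head _ _).
  have hy : 1 <= y <= n by apply: hr; rewrite !inE eqxx orbT.
  have xy : x != y by apply: contraNneq nx => ->; rewrite mem_head.
  move: xy => /eqP xy. rewrite /absdiff. lia.
apply: (IH y) => // z hz; apply: hr; by rewrite inE hz orbT.
Qed.

Definition zf (n i : nat) : nat := if i %% 2 == 1 then n - i %/ 2 else i %/ 2 + 1.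

Lemma pairmap_map (f : nat -> nat) (g : nat -> nat -> nat) m k :
  pairmap g (f m) (map f (iota m.+1 k)) = map (fun i => g (f i) (f i.+1)) (iota m k).
Proof. by elim: k m => [|k IH] m //=; rewrite IH. Qed.

Lemma zig_graceful n : 1 <= n -> graceful_perm n (map (zf n) (iota 0 n)).
Proof.
move=> hn; split.
  apply: perm_range.
  - rewrite map_inj_in_uniq ?iota_uniq // => i j.
    rewrite !mem_iota /zf => hi hj.
    case: eqP => a; case: eqP => b; lia.
  - by rewrite size_map size_iota.
  - move=> x /mapP [i]; rewrite mem_iota /zf => hi ->.
    case: eqP => a; lia.
rewrite /consec_diffs.
have -> : iota 0 n = 0 :: iota 1 n.-1 by case: n hn.
rewrite /= pairmap_map map_inj_in_uniq ?iota_uniq // => i j.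
rewrite !mem_iota /zf /absdiff => hi hj.
case: eqP => a; case: eqP => b; case: eqP => c; case: eqP => d; lia.
Qed.

Theorem corollary1 (n : nat) (hn : 1 <= n) :
  (n %% 4 = 0 \/ n %% 4 = 1) <->
  (forall s : seq nat, graceful_perm n s ->
     head 0 s = last 0 s %[mod 2]).
Proof.
split.
  move=> h4 s [ps ud].
  have us : uniq s by rewrite (perm_uniq ps) iota_uniq.
  have szs : size s = n by rewrite (perm_size ps) size_iota.
  case: s ps us szs ud => [|x t] ps us szs ud; first by move: szs; lia.
  have hr : forall y, y \in x :: t -> 1 <= y <= n.
    by move=> y; rewrite (perm_mem ps) mem_iota; lia.
  have pd : perm_eq (consec_diffs (x :: t)) (iota 1 n.-1).
    apply: perm_range => //.
      rewrite /consec_diffs size_pairmap /=; move: szs => /=; lia.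
    exact: range_pairmap hr us.
  have hs := sumn_iota1 n.-1.
  rewrite -(perm_sumn pd) /consec_diffs /= in hs.
  have hp := par_pairmap x t.
  rewrite /=.
  set S := sumn _ in hs hp.
  have : S %% 2 = 0.
    case: h4 => h4.
    - have [q hq] : exists q, n = 4 * q by exists (n %/ 4); lia.
      move: hs; rewrite hq; rewrite -muln2.
      have -> : (4 * q).-1 * (4 * q).-1.+1 = 2 * (2 * q * (4 * q).-1) by clear hq; case: q => [|q]; nia.
      lia.
    - have [q hq] : exists q, n = 4 * q + 1 by exists (n %/ 4); lia.
      move: hs; rewrite hq; rewrite -muln2.
      have -> : (4 * q + 1).-1 * (4 * q + 1).-1.+1 = 2 * (2 * q * (4 * q + 1)) by nia.
      lia.
  lia.
move=> H.
have := H _ (zig_graceful n hn).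
rewrite -(nth_last 0) size_map size_iota (nth_map 0) ?size_iota; last by case: n hn H.
rewrite nth_iota; last by case: n hn H.
case: n hn H => [//|m] _ _ /=.
rewrite /zf /=.
case: eqP => a; lia.
Qed.
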